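(* An equation $u_t+C(t,x)uu_x=A^2(t,x)u_{xx}$ of the class $\mathcal L$ is mapped by a point transformation to the classical Burgers equation $\tilde u_{\tilde t}+\tilde u\tilde u_{\tilde x}=\tilde u_{\tilde x\tilde x}$ if and only if \[ \left(\frac{C(t,x)^2}{A^2(t,x)}\right)_x=0,\qquad \left(\frac{C}{A^2}\right)_t=-C_{xx}. \] A point transformation realizing this equivalence can be chosen of the form $\tilde t=T(t)$, $\tilde x=X(t,x)$, $\tilde u=U^1(t)u+U^0(t,x)$ with $T_t=C^2/A^2$, $X_x=C/A^2$, $U^1=1$ and $U^0=0$.
   Context: All functions are smooth. $\mathcal L$ denotes the class of equations $u_t+C(t,x)uu_x=A^2(t,x)u_{xx}$ for $u(t,x)$, with arbitrary elements $A^2$ and $C$ being smooth functions of $(t,x)$ with $A^2C\neq0$; $A^2$ is the name of a single function (the superscript is an index), while $C^2$ denotes the square of $C$. *)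

(* Defs.v *)
From Stdlib Require Import Reals.
From Coquelicot Require Import Coquelicot.
Open Scope R_scope.

Inductive dir2 := D2t | D2x.
Inductive dir3 := D3t | D3x | D3u.

(** iterated partial derivatives along a word of directions
    (the head of the list is the last derivative taken) *)
Fixpoint ipd2 (w : list dir2) (F : R -> R -> R) : R -> R -> R :=
  match w with
  | nil => F
  | cons d w' =>
      let G := ipd2 w' F in
      match d with
      | D2t => fun t x => Derive (fun s => G s x) t
      | D2x => fun t x => Derive (fun y => G t y) x
      end
  end.

Fixpoint ipd3 (w : list dir3) (F : R -> R -> R -> R) : R -> R -> R -> R :=
  match w with
  | nil => F
  | cons d w' =>
      let G := ipd3 w' F in
      match d with
      | D3t => fun t x u => Derive (fun s => G s x u) t
      | D3x => fun t x u => Derive (fun y => G t y u) x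
      | D3u => fun t x u => Derive (fun v => G t x v) u
      end
  end.

Definition smooth2 (F : R -> R -> R) : Prop :=
  forall w : list dir2,
    (forall t x, ex_derive (fun s => ipd2 w F s x) t /\
                 ex_derive (fun y => ipd2 w F t y) x) /\
    (forall t x, continuous (fun p : R * R => ipd2 w F (fst p) (snd p)) (t, x)).

Definition smooth3 (F : R -> R -> R -> R) : Prop :=
  forall w : list dir3,
    (forall t x u, ex_derive (fun s => ipd3 w F s x u) t /\
                   ex_derive (fun y => ipd3 w F t y u) x /\
                   ex_derive (fun v => ipd3 w F t x v) u) /\
    (forall t x u, continuous
       (fun p : R * R * R => ipd3 w F (fst (fst p)) (snd (fst p)) (snd p)) (t, x, u)).

Definition pd_t (F : R -> R -> R -> R) t x u := Derive (fun s => F s x u) t.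
Definition pd_x (F : R -> R -> R -> R) t x u := Derive (fun y => F t y u) x.
Definition pd_u (F : R -> R -> R -> R) t x u := Derive (fun v => F t x v) u.

Definition jacobian3 (T X U : R -> R -> R -> R) t x u : R :=
  pd_t T t x u * (pd_x X t x u * pd_u U t x u - pd_u X t x u * pd_x U t x u)
  - pd_x T t x u * (pd_t X t x u * pd_u U t x u - pd_u X t x u * pd_t U t x u)
  + pd_u T t x u * (pd_t X t x u * pd_x U t x u - pd_x X t x u * pd_t U t x u).

Definition point_transformation (T X U : R -> R -> R -> R) : Prop :=
  smooth3 T /\ smooth3 X /\ smooth3 U /\
  forall t x u, jacobian3 T X U t x u <> 0.

(** * Jet space and prolongation.
    First-order jet coordinates: (t,x,u,p,q) with p = u_t, q = u_x.
    Second-order jet coordinates: additionally (r,s,w) with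
    r = u_tt, s = u_tx, w = u_xx. *)

Definition Dt0 (F : R -> R -> R -> R) : R -> R -> R -> R -> R -> R :=
  fun t x u p q => pd_t F t x u + p * pd_u F t x u.
Definition Dx0 (F : R -> R -> R -> R) : R -> R -> R -> R -> R -> R :=
  fun t x u p q => pd_x F t x u + q * pd_u F t x u.

Definition Dt1 (G : R -> R -> R -> R -> R -> R)
  : R -> R -> R -> R -> R -> R -> R -> R -> R :=
  fun t x u p q r s w =>
    Derive (fun a => G a x u p q) t + p * Derive (fun a => G t x a p q) u
    + r * Derive (fun a => G t x u a q) p + s * Derive (fun a => G t x u p a) q.
Definition Dx1 (G : R -> R -> R -> R -> R -> R)
  : R -> R -> R -> R -> R -> R -> R -> R -> R :=
  fun t x u p q r s w =>
    Derive (fun a => G t a u p q) x + q * Derive (fun a => G t x a p q) u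
    + s * Derive (fun a => G t x u a q) p + w * Derive (fun a => G t x u p a) q.

Section Prolongation.
Variables T X U : R -> R -> R -> R.

Definition pDelta t x u p q : R :=
  Dt0 T t x u p q * Dx0 X t x u p q - Dx0 T t x u p q * Dt0 X t x u p q.

Definition new_ut t x u p q : R :=
  (Dt0 U t x u p q * Dx0 X t x u p q - Dx0 U t x u p q * Dt0 X t x u p q)
  / pDelta t x u p q.
Definition new_ux t x u p q : R :=
  (Dx0 U t x u p q * Dt0 T t x u p q - Dt0 U t x u p q * Dx0 T t x u p q)
  / pDelta t x u p q.

Definition new_uxx t x u p q r s w : R :=
  (Dx1 new_ux t x u p q r s w * Dt0 T t x u p q
   - Dt1 new_ux t x u p q r s w * Dx0 T t x u p q)
  / pDelta t x u p q.
End Prolongation.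

(** The (second-order prolongation of the) point transformation (T,X,U) maps
    the equation u_t + C u u_x = A2 u_xx into the Burgers equation
    u~_{t~} + u~ u~_{x~} = u~_{x~x~}: every point of the equation manifold
    (in the region where the prolongation is defined, pDelta <> 0) is sent to
    a point of the Burgers equation manifold. *)
Definition maps_to_Burgers (A2 C : R -> R -> R) (T X U : R -> R -> R -> R)
  : Prop :=
  forall t x u p q r s w,
    pDelta T X t x u p q <> 0 ->
    p + C t x * u * q = A2 t x * w ->
    new_ut T X U t x u p q + U t x u * new_ux T X U t x u p q
      = new_uxx T X U t x u p q r s w.

Definition class_L (A2 C : R -> R -> R) : Prop :=
  smooth2 A2 /\ smooth2 C /\ forall t x, A2 t x * C t x <> 0.

(* Main.v *)
Require Import Defs.
From Stdlib Require Import Reals Lra Lia List FunctionalExtensionality.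
From Coquelicot Require Import Coquelicot.
Open Scope R_scope.

Definition P2 (F : R -> R -> R) : Prop :=
  (forall t x, ex_derive (fun s => F s x) t /\ ex_derive (fun y => F t y) x) /\
  (forall t x, continuous (fun p : R * R => F (fst p) (snd p)) (t, x)).

Definition dt2 (F : R -> R -> R) := fun t x => Derive (fun s => F s x) t.
Definition dx2 (F : R -> R -> R) := fun t x => Derive (fun y => F t y) x.

Lemma ipd2_app : forall w1 w2 F, ipd2 (w1 ++ w2) F = ipd2 w1 (ipd2 w2 F).
Proof. induction w1 as [|d w1 IH]; intros; simpl; [reflexivity|].
  rewrite IH; reflexivity. Qed.

Lemma last_dec {A} (w : list A) : w = nil \/ exists w' d, w = w' ++ (d :: nil).
Proof. induction w as [|a w IH]; [now left|right].
  destruct IH as [->|[w' [d ->]]]; [exists nil, a; reflexivity|].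
  exists (a :: w'), d; reflexivity. Qed.

Definition good2 n F := forall w, (length w <= n)%nat -> P2 (ipd2 w F).

Lemma smooth2_good F : smooth2 F <-> forall n, good2 n F.
Proof. split.
  - intros H n w _. exact (H w).
  - intros H w. apply (H (length w) w). lia. Qed.

Lemma good2_S n F : good2 (S n) F <-> P2 F /\ good2 n (dt2 F) /\ good2 n (dx2 F).
Proof. split.
  - intros H. split; [apply (H nil); simpl; lia|]. split.
    + intros w Hw. specialize (H (w ++ D2t :: nil)).
      rewrite ipd2_app in H. apply H. rewrite length_app; simpl; lia.
    + intros w Hw. specialize (H (w ++ D2x :: nil)).
      rewrite ipd2_app in H. apply H. rewrite length_app; simpl; lia.
  - intros [H0 [Ht Hx]] w Hw. destruct (last_dec w) as [->|[w' [d ->]]]; [exact H0|].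
    rewrite ipd2_app. rewrite length_app in Hw; simpl in Hw.
    destruct d; [apply Ht|apply Hx]; lia. Qed.

Lemma good2_mono n F : good2 (S n) F -> good2 n F.
Proof. intros H w Hw. apply H. lia. Qed.

Lemma good2_ext n F G : (forall t x, F t x = G t x) -> good2 n F -> good2 n G.
Proof. intros H. replace G with F; [auto|].
  apply functional_extensionality; intro t; apply functional_extensionality; intro x; auto. Qed.

Lemma smooth2_ext F G : (forall t x, F t x = G t x) -> smooth2 F -> smooth2 G.
Proof. intros H. replace G with F; [auto|].
  apply functional_extensionality; intro t; apply functional_extensionality; intro x; auto. Qed.

Lemma P2_const c : P2 (fun _ _ => c).
Proof. split; [intros; split; apply ex_derive_const|].
  intros. apply continuous_const. Qed.

Lemma good2_const n c : good2 n (fun _ _ => c).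
Proof. revert c; induction n; intro c.
  - intros w Hw. destruct w; [apply P2_const|simpl in Hw; lia].
  - apply good2_S. split; [apply P2_const|]. unfold dt2, dx2.
    split; eapply good2_ext; try apply (IHn 0); intros; simpl; rewrite Derive_const; reflexivity. Qed.

Lemma P2_plus F G : P2 F -> P2 G -> P2 (fun t x => F t x + G t x).
Proof. intros [HF1 HF2] [HG1 HG2]. split.
  - intros t x. destruct (HF1 t x), (HG1 t x). split; [apply (ex_derive_plus (fun s => F s x) (fun s => G s x))|apply (ex_derive_plus (fun s => F t s) (fun s => G t s))]; auto.
  - intros t x. apply (continuous_plus (fun p : R*R => F (fst p) (snd p)) (fun p : R*R => G (fst p) (snd p))); auto. Qed.

Lemma P2_mult F G : P2 F -> P2 G -> P2 (fun t x => F t x * G t x).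
Proof. intros [HF1 HF2] [HG1 HG2]. split.
  - intros t x. destruct (HF1 t x), (HG1 t x). split; [apply (ex_derive_mult (fun s => F s x) (fun s => G s x))|apply (ex_derive_mult (fun s => F t s) (fun s => G t s))]; auto.
  - intros t x. apply (continuous_mult (fun p : R*R => F (fst p) (snd p)) (fun p : R*R => G (fst p) (snd p))); auto. Qed.

Lemma P2_inv F : (forall t x, F t x <> 0) -> P2 F -> P2 (fun t x => / F t x).
Proof. intros Hnz [HF1 HF2]. split.
  - intros t x. destruct (HF1 t x). split; [apply (ex_derive_inv (fun s => F s x))|apply (ex_derive_inv (fun s => F t s))]; auto.
  - intros t x. apply (continuous_comp (fun p : R*R => F (fst p) (snd p)) Rinv); auto. apply continuous_Rinv. auto. Qed.

Lemma good2_0 n F : good2 n F -> P2 F.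
Proof. intros H. apply (H nil). simpl; lia. Qed.

Lemma good2_plus n : forall F G, good2 n F -> good2 n G -> good2 n (fun t x => F t x + G t x).
Proof. induction n; intros F G HF HG.
  - intros w Hw. destruct w; [|simpl in Hw; lia]. apply P2_plus; apply good2_0 with 0%nat; auto.
  - apply good2_S in HF as [HF0 [HFt HFx]]. apply good2_S in HG as [HG0 [HGt HGx]].
    apply good2_S. split; [apply P2_plus; auto|]. destruct HF0 as [HF1 _], HG0 as [HG1 _]. split.
    + eapply good2_ext; [|apply (IHn _ _ HFt HGt)]. intros t x. unfold dt2.
      rewrite Derive_plus; [reflexivity|exact (proj1 (HF1 _ _))|exact (proj1 (HG1 _ _))].
    + eapply good2_ext; [|apply (IHn _ _ HFx HGx)]. intros t x. unfold dx2.
      rewrite Derive_plus; [reflexivity|exact (proj2 (HF1 _ _))|exact (proj2 (HG1 _ _))]. Qed.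

Lemma good2_mult n : forall F G, good2 n F -> good2 n G -> good2 n (fun t x => F t x * G t x).
Proof. induction n; intros F G HF HG.
  - intros w Hw. destruct w; [|simpl in Hw; lia]. apply P2_mult; apply good2_0 with 0%nat; auto.
  - pose proof (good2_mono _ _ HF) as HFn. pose proof (good2_mono _ _ HG) as HGn.
    apply good2_S in HF as [HF0 [HFt HFx]]. apply good2_S in HG as [HG0 [HGt HGx]].
    apply good2_S. split; [apply P2_mult; auto|]. destruct HF0 as [HF1 _], HG0 as [HG1 _]. split.
    + eapply good2_ext; [|apply (good2_plus _ _ _ (IHn _ _ HFt HGn) (IHn _ _ HFn HGt))].
      intros t x. unfold dt2. rewrite Derive_mult; [reflexivity|exact (proj1 (HF1 _ _))|exact (proj1 (HG1 _ _))].
    + eapply good2_ext; [|apply (good2_plus _ _ _ (IHn _ _ HFx HGn) (IHn _ _ HFn HGx))].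
      intros t x. unfold dx2. rewrite Derive_mult; [reflexivity|exact (proj2 (HF1 _ _))|exact (proj2 (HG1 _ _))]. Qed.

Lemma good2_inv n : forall F, (forall t x, F t x <> 0) -> good2 n F -> good2 n (fun t x => / F t x).
Proof. induction n; intros F Hnz HF.
  - intros w Hw. destruct w; [|simpl in Hw; lia]. apply P2_inv; auto. apply good2_0 with 0%nat; auto.
  - pose proof (good2_mono _ _ HF) as HFn. pose proof (IHn _ Hnz HFn) as HI.
    apply good2_S in HF as [HF0 [HFt HFx]].
    apply good2_S. split; [apply P2_inv; auto|]. destruct HF0 as [HF1 _]. split.
    + eapply good2_ext; [|apply (good2_mult _ _ _ (good2_mult _ _ _ (good2_mult _ _ _ (good2_const n (-1)) HFt) HI) HI)].
      intros t x. unfold dt2. rewrite Derive_inv; [|exact (proj1 (HF1 _ _))|auto]. field. auto.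
    + eapply good2_ext; [|apply (good2_mult _ _ _ (good2_mult _ _ _ (good2_mult _ _ _ (good2_const n (-1)) HFx) HI) HI)].
      intros t x. unfold dx2. rewrite Derive_inv; [|exact (proj2 (HF1 _ _))|auto]. change (Derive (F t) x) with (Derive (fun y => F t y) x). field. auto. Qed.

Lemma smooth2_plus F G : smooth2 F -> smooth2 G -> smooth2 (fun t x => F t x + G t x).
Proof. rewrite !smooth2_good. intros; apply good2_plus; auto. Qed.
Lemma smooth2_mult F G : smooth2 F -> smooth2 G -> smooth2 (fun t x => F t x * G t x).
Proof. rewrite !smooth2_good. intros; apply good2_mult; auto. Qed.
Lemma smooth2_inv F : (forall t x, F t x <> 0) -> smooth2 F -> smooth2 (fun t x => / F t x).
Proof. rewrite !smooth2_good. intros; apply good2_inv; auto. Qed.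
Lemma smooth2_const c : smooth2 (fun _ _ => c).
Proof. rewrite smooth2_good. intros; apply good2_const. Qed.
Lemma smooth2_dt F : smooth2 F -> smooth2 (dt2 F).
Proof. rewrite !smooth2_good. intros H n. apply (proj1 (good2_S n F) (H (S n))). Qed.
Lemma smooth2_dx F : smooth2 F -> smooth2 (dx2 F).
Proof. rewrite !smooth2_good. intros H n. apply (proj1 (good2_S n F) (H (S n))). Qed.
Lemma smooth2_P2 F : smooth2 F -> P2 F.
Proof. intros H. apply (H nil). Qed.

Lemma smooth2_intro F : P2 F -> smooth2 (dt2 F) -> smooth2 (dx2 F) -> smooth2 F.
Proof. rewrite !smooth2_good. intros H0 Ht Hx n. destruct n.
  - intros w Hw. destruct w; [auto|simpl in Hw; lia].
  - apply good2_S. auto. Qed.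

Lemma cont1_eps (f : R -> R) t : continuous f t ->
  forall eps, 0 < eps -> exists d, 0 < d /\ forall s, Rabs (s - t) < d -> Rabs (f s - f t) < eps.
Proof. intros Hc eps Heps.
  destruct (proj1 (filterlim_locally f (f t)) Hc (mkposreal eps Heps)) as [d Hd].
  exists d. split; [apply cond_pos|]. intros s Hs. specialize (Hd s).
  unfold ball in Hd; simpl in Hd; unfold AbsRing_ball, abs, minus, plus, opp in Hd; simpl in Hd.
  apply Hd. unfold ball; simpl; unfold AbsRing_ball, abs, minus, plus, opp; simpl. exact Hs. Qed.

Lemma joint_cont (F G : R -> R -> R) :
  (forall t x, is_derive (fun y => F t y) x (G t x)) ->
  (forall t x, continuity_2d_pt G t x) ->
  (forall t x, continuous (fun s => F s x) t) ->
  forall t x, continuity_2d_pt F t x.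
Proof. intros HD HG HF t x eps.
  destruct (HG t x (mkposreal 1 Rlt_0_1)) as [d1 Hd1]. simpl in Hd1.
  set (M := Rabs (G t x) + 1).
  assert (HM : 0 < M) by (unfold M; pose proof (Rabs_pos (G t x)); lra).
  destruct (cont1_eps (fun s => F s x) t (HF t x) (eps/2)) as [d2 [Hd2 Hd2']].
  { pose proof (cond_pos eps); lra. }
  assert (Hd3 : 0 < eps / (2 * M)). { pose proof (cond_pos eps). apply Rdiv_lt_0_compat; lra. }
  exists (mkposreal _ (Rmin_pos _ _ (cond_pos d1) (Rmin_pos _ _ Hd2 Hd3))). simpl.
  intros u v Hu Hv.
  pose proof (Rmin_l d1 (Rmin d2 (eps / (2*M)))) as m1.
  pose proof (Rmin_r d1 (Rmin d2 (eps / (2*M)))) as m2.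
  pose proof (Rmin_l d2 (eps / (2*M))) as m3.
  pose proof (Rmin_r d2 (eps / (2*M))) as m4.
  destruct (MVT_abs (fun y => F u y) (fun y => G u y) x v) as [c [Hc1 Hc2]].
  { intros c _. apply is_derive_Reals. apply HD. }
  assert (HGc : Rabs (G u c) <= M).
  { assert (Rabs (c - x) < d1).
    { apply Rle_lt_trans with (Rabs (v - x)); [|lra].
      destruct (Rle_dec x v).
      - rewrite Rmin_left, Rmax_right in Hc2 by lra. rewrite !Rabs_right; lra.
      - rewrite Rmin_right, Rmax_left in Hc2 by lra. rewrite !Rabs_left1; lra. }
    specialize (Hd1 u c ltac:(lra) H).
    unfold M. pose proof (Rabs_triang_inv (G u c) (G t x)). lra. }
  assert (H1 : Rabs (F u v - F u x) <= M * Rabs (v - x)).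
  { rewrite Hc1. apply Rmult_le_compat_r; [apply Rabs_pos|auto]. }
  assert (H2 : Rabs (F u x - F t x) < eps / 2) by (apply Hd2'; lra).
  assert (H3 : M * Rabs (v - x) < eps / 2).
  { apply Rlt_le_trans with (M * (eps / (2 * M))).
    - apply Rmult_lt_compat_l; lra.
    - right. field. lra. }
  replace (F u v - F t x) with ((F u v - F u x) + (F u x - F t x)) by ring.
  pose proof (Rabs_triang (F u v - F u x) (F u x - F t x)). lra. Qed.

Lemma cont2_of (F : R -> R -> R) t x :
  continuity_2d_pt F t x -> continuous (fun p : R * R => F (fst p) (snd p)) (t, x).
Proof. intros H. apply continuity_2d_pt_filterlim in H. exact H. Qed.

Lemma cont2_to (F : R -> R -> R) t x :
  continuous (fun p : R * R => F (fst p) (snd p)) (t, x) -> continuity_2d_pt F t x.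
Proof. intros H. apply continuity_2d_pt_filterlim. exact H. Qed.

Lemma const_of_derive0 (f : R -> R) :
  (forall y, ex_derive f y) -> (forall y, Derive f y = 0) -> forall a b, f a = f b.
Proof. intros Hd H0 a b.
  destruct (MVT_abs f (fun _ => 0) b a) as [c [Hc _]].
  { intros c _. apply is_derive_Reals. replace 0 with (Derive f c) by apply H0.
    apply Derive_correct, Hd. }
  rewrite Rabs_R0, Rmult_0_l in Hc.
  apply Rminus_diag_uniq. apply Rabs_eq_0 in Hc. exact Hc. Qed.

Definition P3 (F : R -> R -> R -> R) : Prop :=
    (forall t x u, ex_derive (fun s => F s x u) t /\
                   ex_derive (fun y => F t y u) x /\
                   ex_derive (fun v => F t x v) u) /\
    (forall t x u, continuous
       (fun p : R * R * R => F (fst (fst p)) (snd (fst p)) (snd p)) (t, x, u)).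

Lemma smooth3_closed (S : (R -> R -> R -> R) -> Prop) :
  (forall F, S F -> P3 F /\ S (fun t x u => Derive (fun s => F s x u) t)
     /\ S (fun t x u => Derive (fun y => F t y u) x)
     /\ S (fun t x u => Derive (fun v => F t x v) u)) ->
  forall F, S F -> smooth3 F.
Proof. intros H F HF.
  assert (Hw : forall w, S (ipd3 w F)).
  { induction w as [|d w IH]; [exact HF|]. destruct d; simpl; apply H; exact IH. }
  intros w. apply (H _ (Hw w)). Qed.

Lemma smooth3_lift (G : R -> R -> R) (c : R) :
  smooth2 G -> smooth3 (fun t x u => G t x + c * u).
Proof. intros HG.
  apply (smooth3_closed (fun F => exists G c, smooth2 G /\ F = fun t x u => G t x + c * u)).
  2:{ exists G, c; auto. }
  clear G c HG. intros F [G [c [HG ->]]].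
  destruct (smooth2_P2 _ HG) as [HG1 HG2].
  split; [split|split; [|split]].
  - intros t x u. split; [|split].
    + apply (ex_derive_plus (fun s => G s x) (fun _ => c * u)); [exact (proj1 (HG1 _ _))|apply ex_derive_const].
    + apply (ex_derive_plus (fun s => G t s) (fun _ => c * u)); [exact (proj2 (HG1 _ _))|apply ex_derive_const].
    + apply (ex_derive_plus (fun _ => G t x) (fun v => c * v)); [apply ex_derive_const|].
      apply ex_derive_scal. apply ex_derive_id.
  - intros t x u.
    apply (continuous_plus (fun p : R*R*R => G (fst (fst p)) (snd (fst p))) (fun p : R*R*R => c * snd p)).
    + apply (continuous_comp (fun p : R*R*R => fst p) (fun q : R*R => G (fst q) (snd q))).
      * apply continuous_fst.
      * apply HG2.
    + apply (continuous_mult (fun _ : R*R*R => c) (fun p : R*R*R => snd p)).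
      * apply continuous_const.
      * apply continuous_snd.
  - exists (dt2 G), 0. split; [apply smooth2_dt; auto|].
    apply functional_extensionality; intro t; apply functional_extensionality; intro x;
    apply functional_extensionality; intro u.
    rewrite Derive_plus; [|exact (proj1 (HG1 _ _))|apply ex_derive_const]. rewrite Derive_const. unfold dt2. ring.
  - exists (dx2 G), 0. split; [apply smooth2_dx; auto|].
    apply functional_extensionality; intro t; apply functional_extensionality; intro x;
    apply functional_extensionality; intro u.
    rewrite Derive_plus; [|exact (proj2 (HG1 _ _))|apply ex_derive_const]. rewrite Derive_const. unfold dx2. rewrite Rmult_0_l, !Rplus_0_r. reflexivity.
  - exists (fun _ _ => c), 0. split; [apply smooth2_const|].
    apply functional_extensionality; intro t; apply functional_extensionality; intro x;
    apply functional_extensionality; intro u.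
    rewrite Derive_plus; [|apply ex_derive_const|apply ex_derive_scal, ex_derive_id].
    rewrite Derive_const, Derive_scal, Derive_id. ring. Qed.

Lemma ext_poly (F : R -> R -> R) l0 l1 l2 :
  (forall p q v1 v2, F p q - 4 * F (p+v1) (q+v2) + 6 * F (p+2*v1) (q+2*v2)
        - 4 * F (p+3*v1) (q+3*v2) + F (p+4*v1) (q+4*v2) = 0) ->
  ~ (l0 = 0 /\ l1 = 0 /\ l2 = 0) ->
  (forall p q, l0 + l1*p + l2*q <> 0 -> F p q = 0) -> forall p q, F p q = 0.
Proof. intros HFD Hl H p q.
  destruct (Req_dec (l0 + l1*p + l2*q) 0) as [H0|H0]; [|auto].
  set (kk := l1*l1 + l2*l2).
  assert (Hk : 0 < kk).
  { unfold kk. destruct (Req_dec l1 0); destruct (Req_dec l2 0).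
    - exfalso. apply Hl. subst. split; [lra|auto].
    - pose proof (Rle_0_sqr l1). unfold Rsqr in *. assert (0 < l2*l2) by (apply Rsqr_pos_lt; auto). lra.
    - pose proof (Rle_0_sqr l2). unfold Rsqr in *. assert (0 < l1*l1) by (apply Rsqr_pos_lt; auto). lra.
    - pose proof (Rle_0_sqr l2). unfold Rsqr in *. assert (0 < l1*l1) by (apply Rsqr_pos_lt; auto). lra. }
  assert (Hi : forall m, 0 < m -> F (p + m*l1) (q + m*l2) = 0).
  { intros m Hm. apply H. replace (l0 + l1 * (p + m * l1) + l2 * (q + m * l2)) with
      ((l0 + l1*p + l2*q) + m * kk) by (unfold kk; ring). rewrite H0.
    assert (0 < m * kk) by (apply Rmult_lt_0_compat; auto). lra. }
  specialize (HFD p q l1 l2).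
  replace (p + l1) with (p + 1*l1) in HFD by ring. replace (q + l2) with (q + 1*l2) in HFD by ring.
  rewrite !Hi in HFD by lra. lra. Qed.

Section Alg.
Variables a b c d e f g h k : R.
Definition n0 := h*a - g*b.
Definition n1 := h*c - k*b.
Definition n2 := k*a - g*c.
Definition l0 := a*e - b*d.
Definition l1 := c*e - b*f.
Definition l2 := a*f - c*d.
Definition JJ := a*(e*k - f*h) - b*(d*k - f*g) + c*(d*h - e*g).
Definition PN q := n1*l0 - l1*n0 + q*(n1*l2 - l1*n2).
Definition QN p := n2*l0 - l2*n0 + p*(n2*l1 - l2*n1).
Definition DD p q := (a + p*c)*(e + q*f) - (b + q*c)*(d + p*f).

Lemma DD_eq p q : DD p q = l0 + l1*p + l2*q.
Proof. unfold DD, l0, l1, l2. ring. Qed.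

Lemma aux_P : ~ (b = 0 /\ 0 = 0 /\ c = 0) -> (forall p q : R, PN q * (b + q*c) = 0) -> forall p q : R, PN q = 0.
Proof. intros Hbc H1.
  apply (ext_poly (fun p q : R => PN q) b 0 c); [intros; unfold PN; ring|exact Hbc|].
  intros p0 q0 Hq; specialize (H1 p0 q0); apply Rmult_integral in H1; destruct H1 as [H1|H1]; [exact H1|].
  exfalso; apply Hq; replace (b + 0*p0 + c*q0) with (b + q0*c) by ring; exact H1. Qed.

Lemma aux_Q : ~ (b = 0 /\ 0 = 0 /\ c = 0) -> (forall p q : R, PN q * (a + p*c) - QN p * (b + q*c) = 0) ->
   (forall p q : R, PN q = 0) -> forall p q : R, QN p = 0.
Proof. intros Hbc H2 HP.
  apply (ext_poly (fun p q : R => QN p) b 0 c); [intros; unfold QN; ring|exact Hbc|].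
  intros p0 q0 Hq; specialize (H2 p0 q0); rewrite (HP p0 q0) in H2.
  assert (H3 : QN p0 * (b + q0*c) = 0) by lra; apply Rmult_integral in H3; destruct H3 as [H3|H3]; [exact H3|].
  exfalso; apply Hq; replace (b + 0*p0 + c*q0) with (b + q0*c) by ring; exact H3. Qed.

Lemma alg_C1 : JJ <> 0 ->
  (forall p q, DD p q <> 0 -> PN q * (b + q*c) = 0 /\ PN q * (a + p*c) - QN p * (b + q*c) = 0) ->
  b = 0 /\ c = 0.
Proof. intros HJ H.
  assert (Hl : ~ (l0 = 0 /\ l1 = 0 /\ l2 = 0)).
  { intros [h0 [h1 h2]]. apply HJ. replace JJ with (-g*l1 - h*l2 + k*l0) by (unfold JJ, l0, l1, l2; ring).
    rewrite h0, h1, h2. ring. }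
  assert (H1 : forall p q : R, PN q * (b + q*c) = 0).
  { apply (ext_poly (fun p q : R => PN q * (b + q*c)) l0 l1 l2); auto.
    - intros; unfold PN; ring.
    - intros p q Hpq. apply (H p q). rewrite DD_eq. auto. }
  assert (H2 : forall p q, PN q * (a + p*c) - QN p * (b + q*c) = 0).
  { apply (ext_poly (fun p q => PN q * (a + p*c) - QN p * (b + q*c)) l0 l1 l2); auto.
    - intros; unfold PN, QN; ring.
    - intros p q Hpq. apply (H p q). rewrite DD_eq. auto. }
  destruct (Req_dec b 0) as [Hb|Hb]; [destruct (Req_dec c 0) as [Hc|Hc]; [auto|]|]; exfalso.
  all: assert (Hbc : ~ (b = 0 /\ 0 = 0 /\ c = 0)) by (intros [? [? ?]]; auto).
  all: pose proof (aux_P Hbc H1) as HP.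
  all: pose proof (aux_Q Hbc H2 HP) as HQ.
  all: pose proof (HP 0 0) as e1; pose proof (HP 0 1) as e2; pose proof (HQ 0 0) as e3;
  unfold PN, QN in *.
  all: assert (m1 : n1*l0 - n0*l1 = - JJ*b) by (unfold n0,n1,n2,l0,l1,l2,JJ; ring).
  all: assert (m2 : n2*l0 - n0*l2 = JJ*a) by (unfold n0,n1,n2,l0,l1,l2,JJ; ring).
  all: assert (m3 : n1*l2 - n2*l1 = - JJ*c) by (unfold n0,n1,n2,l0,l1,l2,JJ; ring).
  all: assert (z1 : JJ * b = 0) by lra.
  all: assert (z3 : JJ * c = 0) by lra.
  all: apply Rmult_integral in z1; apply Rmult_integral in z3; intuition.
Qed.
End Alg.

Lemma dz_lemma a b c d e f g h k p q : DD a b c d e f p q <> 0 ->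
  Derive (fun z => ((h + q*k)*(a + z*c) - (g + z*k)*(b + q*c)) /
                   ((a + z*c)*(e + q*f) - (b + q*c)*(d + z*f))) p
  = PN a b c d e f g h k q / (DD a b c d e f p q)^2.
Proof. intros HD. unfold DD in HD. apply is_derive_unique. auto_derive; [exact HD|].
  unfold PN, DD, n0, n1, n2, l0, l1, l2. field. exact HD. Qed.

Lemma dq_lemma a b c d e f g h k p q : DD a b c d e f p q <> 0 ->
  Derive (fun z => ((h + z*k)*(a + p*c) - (g + p*k)*(b + z*c)) /
                   ((a + p*c)*(e + z*f) - (b + z*c)*(d + p*f))) q
  = QN a b c d e f g h k p / (DD a b c d e f p q)^2.
Proof. intros HD. unfold DD in HD. apply is_derive_unique. auto_derive; [exact HD|].
  unfold QN, DD, n0, n1, n2, l0, l1, l2. field. exact HD. Qed.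

Lemma rs_extract (L G1 G2 G3 P Q a b c p q w D : R) : D <> 0 ->
  (forall r s, L = ((G2 + q*G3 + s*P + w*Q)*(a+p*c) - (G1 + p*G3 + r*P + s*Q)*(b+q*c))/D) ->
  P*(b+q*c) = 0 /\ P*(a+p*c) - Q*(b+q*c) = 0.
Proof. intros HD HE.
  pose proof (HE 0 0) as e00. pose proof (HE 1 0) as e10. pose proof (HE 0 1) as e01.
  assert (h1 : - (P*(b+q*c)) / D = 0).
  { replace (- (P*(b+q*c)) / D) with
      (((G2 + q*G3 + 0*P + w*Q)*(a+p*c) - (G1 + p*G3 + 1*P + 0*Q)*(b+q*c))/D -
       ((G2 + q*G3 + 0*P + w*Q)*(a+p*c) - (G1 + p*G3 + 0*P + 0*Q)*(b+q*c))/D) by (field; exact HD).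
    lra. }
  assert (h2 : (P*(a+p*c) - Q*(b+q*c)) / D = 0).
  { replace ((P*(a+p*c) - Q*(b+q*c)) / D) with
      (((G2 + q*G3 + 1*P + w*Q)*(a+p*c) - (G1 + p*G3 + 0*P + 1*Q)*(b+q*c))/D -
       ((G2 + q*G3 + 0*P + w*Q)*(a+p*c) - (G1 + p*G3 + 0*P + 0*Q)*(b+q*c))/D) by (field; exact HD).
    lra. }
  split.
  - unfold Rdiv in h1. apply Rmult_integral in h1. destruct h1 as [h1|h1]; [lra|].
    exfalso. exact (Rinv_neq_0_compat _ HD h1).
  - unfold Rdiv in h2. apply Rmult_integral in h2. destruct h2 as [h2|h2]; [lra|].
    exfalso. exact (Rinv_neq_0_compat _ HD h2). Qed.

Section Forward.
Variables (A2 C : R -> R -> R) (T X U : R -> R -> R -> R).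
Hypothesis HA2 : smooth2 A2.
Hypothesis HC : smooth2 C.
Hypothesis HAC : forall t x, A2 t x * C t x <> 0.
Hypothesis HT : smooth3 T.
Hypothesis HX : smooth3 X.
Hypothesis HU : smooth3 U.
Hypothesis HJ : forall t x u, jacobian3 T X U t x u <> 0.
Hypothesis HM : maps_to_Burgers A2 C T X U.

Lemma A2_nz t x : A2 t x <> 0.
Proof. intro H. apply (HAC t x). rewrite H. ring. Qed.
Lemma C_nz t x : C t x <> 0.
Proof. intro H. apply (HAC t x). rewrite H. ring. Qed.

Lemma JJ_eq t x u : jacobian3 T X U t x u =
  JJ (pd_t T t x u) (pd_x T t x u) (pd_u T t x u) (pd_t X t x u) (pd_x X t x u) (pd_u X t x u)
     (pd_t U t x u) (pd_x U t x u) (pd_u U t x u).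
Proof. unfold jacobian3, JJ. ring. Qed.

Lemma C1 t x u : pd_x T t x u = 0 /\ pd_u T t x u = 0.
Proof.
  apply (alg_C1 (pd_t T t x u) (pd_x T t x u) (pd_u T t x u) (pd_t X t x u) (pd_x X t x u) (pd_u X t x u)
     (pd_t U t x u) (pd_x U t x u) (pd_u U t x u)).
  { rewrite <- JJ_eq. apply HJ. }
  intros p q HD.
  set (w := (p + C t x * u * q) / A2 t x).
  assert (Heq : p + C t x * u * q = A2 t x * w) by (unfold w; field; apply A2_nz).
  pose proof (dz_lemma (pd_t T t x u) (pd_x T t x u) (pd_u T t x u) (pd_t X t x u) (pd_x X t x u) (pd_u X t x u)
     (pd_t U t x u) (pd_x U t x u) (pd_u U t x u) p q HD) as HP.
  pose proof (dq_lemma (pd_t T t x u) (pd_x T t x u) (pd_u T t x u) (pd_t X t x u) (pd_x X t x u) (pd_u X t x u)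
     (pd_t U t x u) (pd_x U t x u) (pd_u U t x u) p q HD) as HQ.
  destruct (rs_extract (new_ut T X U t x u p q + U t x u * new_ux T X U t x u p q)
     (Derive (fun a => new_ux T X U a x u p q) t)
     (Derive (fun a => new_ux T X U t a u p q) x)
     (Derive (fun a => new_ux T X U t x a p q) u)
     (Derive (fun a => new_ux T X U t x u a q) p)
     (Derive (fun a => new_ux T X U t x u p a) q)
     (pd_t T t x u) (pd_x T t x u) (pd_u T t x u) p q w
     (DD (pd_t T t x u) (pd_x T t x u) (pd_u T t x u) (pd_t X t x u) (pd_x X t x u) (pd_u X t x u) p q)
     HD) as [h1 h2].
  { intros r s. exact (HM t x u p q r s w HD Heq). }
  change (Derive (fun a => new_ux T X U t x u a q) p) with
    (Derive (fun z => ((pd_x U t x u + q*pd_u U t x u)*(pd_t T t x u + z*pd_u T t x u) - (pd_t U t x u + z*pd_u U t x u)*(pd_x T t x u + q*pd_u T t x u)) /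
                   ((pd_t T t x u + z*pd_u T t x u)*(pd_x X t x u + q*pd_u X t x u) - (pd_x T t x u + q*pd_u T t x u)*(pd_t X t x u + z*pd_u X t x u))) p) in h1, h2.
  change (Derive (fun a => new_ux T X U t x u p a) q) with
    (Derive (fun z => ((pd_x U t x u + z*pd_u U t x u)*(pd_t T t x u + p*pd_u T t x u) - (pd_t U t x u + p*pd_u U t x u)*(pd_x T t x u + z*pd_u T t x u)) /
                   ((pd_t T t x u + p*pd_u T t x u)*(pd_x X t x u + z*pd_u X t x u) - (pd_x T t x u + z*pd_u T t x u)*(pd_t X t x u + p*pd_u X t x u))) q) in h2.
  rewrite HP in h1, h2. rewrite HQ in h2.
  set (D2 := DD (pd_t T t x u) (pd_x T t x u) (pd_u T t x u) (pd_t X t x u) (pd_x X t x u) (pd_u X t x u) p q) in *.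
  assert (HD2 : D2 ^ 2 <> 0) by (apply pow_nonzero; exact HD).
  split.
  - replace (PN _ _ _ _ _ _ _ _ _ q * (pd_x T t x u + q * pd_u T t x u)) with
      (PN (pd_t T t x u) (pd_x T t x u) (pd_u T t x u) (pd_t X t x u) (pd_x X t x u) (pd_u X t x u)
     (pd_t U t x u) (pd_x U t x u) (pd_u U t x u) q / D2 ^ 2 * (pd_x T t x u + q * pd_u T t x u) * D2^2)
      by (field; exact HD). rewrite h1. ring.
  - match goal with |- ?A * ?B - ?C * ?E = 0 =>
      replace (A * B - C * E) with ((A / D2^2 * B - C / D2^2 * E) * D2^2) by (field; exact HD) end.
    rewrite h2. ring.
Qed.

Lemma Tx0 t x u : pd_x T t x u = 0.
Proof. apply C1. Qed.
Lemma Tu0 t x u : pd_u T t x u = 0.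
Proof. apply C1. Qed.

Lemma J_C1 t x u : jacobian3 T X U t x u =
  pd_t T t x u * (pd_x X t x u * pd_u U t x u - pd_u X t x u * pd_x U t x u).
Proof. unfold jacobian3. rewrite Tx0, Tu0. ring. Qed.

Lemma Tt_nz t x u : pd_t T t x u <> 0.
Proof. intro H. apply (HJ t x u). rewrite J_C1, H. ring. Qed.

Lemma cancel_a (a y m : R) : a <> 0 -> (a * y) / (a * m) = y / m.
Proof. intros Ha. unfold Rdiv. rewrite Rinv_mult.
  replace (a * y * (/ a * / m)) with ((a * / a) * (y * / m)) by ring.
  rewrite Rinv_r by exact Ha. ring. Qed.

Lemma NUX t x u p q : new_ux T X U t x u p q =
  (pd_x U t x u + q * pd_u U t x u) / (pd_x X t x u + q * pd_u X t x u).
Proof. unfold new_ux, pDelta, Dx0, Dt0. rewrite Tx0, Tu0.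
  transitivity ((pd_t T t x u * (pd_x U t x u + q * pd_u U t x u)) / (pd_t T t x u * (pd_x X t x u + q * pd_u X t x u))).
  - unfold Rdiv. f_equal; [ring|f_equal; ring].
  - apply cancel_a, Tt_nz. Qed.

Lemma NUT t x u p q : new_ut T X U t x u p q =
  ((pd_t U t x u + p * pd_u U t x u) * (pd_x X t x u + q * pd_u X t x u)
   - (pd_x U t x u + q * pd_u U t x u) * (pd_t X t x u + p * pd_u X t x u))
  / (pd_t T t x u * (pd_x X t x u + q * pd_u X t x u)).
Proof. unfold new_ut, pDelta, Dx0, Dt0. rewrite Tx0, Tu0. unfold Rdiv. f_equal; f_equal; ring. Qed.

Lemma NUXX t x u p q r s w : new_uxx T X U t x u p q r s w =
  Dx1 (new_ux T X U) t x u p q r s w / (pd_x X t x u + q * pd_u X t x u).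
Proof. unfold new_uxx. unfold pDelta, Dx0, Dt0. rewrite Tx0, Tu0.
  transitivity ((pd_t T t x u * Dx1 (new_ux T X U) t x u p q r s w) / (pd_t T t x u * (pd_x X t x u + q * pd_u X t x u))).
  - unfold Rdiv. f_equal; [ring|f_equal; ring].
  - apply cancel_a, Tt_nz. Qed.

Lemma pDelta_eq t x u p q : pDelta T X t x u p q = pd_t T t x u * (pd_x X t x u + q * pd_u X t x u).
Proof. unfold pDelta, Dx0, Dt0. rewrite Tx0, Tu0. ring. Qed.

Lemma Gx_eq t x u p q : Derive (fun y => new_ux T X U t y u p q) x =
  Derive (fun y => (pd_x U t y u + q * pd_u U t y u) / (pd_x X t y u + q * pd_u X t y u)) x.
Proof. apply Derive_ext. intro y. apply NUX. Qed.
Lemma Gu_eq t x u p q : Derive (fun v => new_ux T X U t x v p q) u =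
  Derive (fun v => (pd_x U t x v + q * pd_u U t x v) / (pd_x X t x v + q * pd_u X t x v)) u.
Proof. apply Derive_ext. intro y. apply NUX. Qed.
Lemma Q_eq t x u p q : pd_x X t x u + q * pd_u X t x u <> 0 ->
  Derive (fun z => new_ux T X U t x u p z) q =
  (pd_u U t x u * pd_x X t x u - pd_x U t x u * pd_u X t x u) / (pd_x X t x u + q * pd_u X t x u)^2.
Proof. intros Hm. rewrite (Derive_ext _ (fun z => (pd_x U t x u + z * pd_u U t x u) / (pd_x X t x u + z * pd_u X t x u)))
  by (intro; apply NUX).
  apply is_derive_unique. auto_derive; [exact Hm|]. field. exact Hm. Qed.

Lemma w_extract (A g h k d e f a q U0 cu G : R) : a <> 0 -> e + q*f <> 0 -> k*e - h*f <> 0 ->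
  (forall w, ((g + (A*w - cu*q)*k)*(e+q*f) - (h+q*k)*(d+(A*w - cu*q)*f))/(a*(e+q*f))
      + U0*((h+q*k)/(e+q*f)) = (G + w * ((k*e - h*f)/(e+q*f)^2))/(e+q*f)) ->
  A*(e+q*f)^2 = a.
Proof. intros Ha Hm Hk H. pose proof (H 0) as e0. pose proof (H 1) as e1.
  assert (Hd : (A*(e+q*f)^2 - a) * (k*e - h*f) / (a * (e+q*f)^3) = 0).
  { replace ((A*(e+q*f)^2 - a) * (k*e - h*f) / (a * (e+q*f)^3)) with
     ((((g + (A*1 - cu*q)*k)*(e+q*f) - (h+q*k)*(d+(A*1 - cu*q)*f))/(a*(e+q*f))
      + U0*((h+q*k)/(e+q*f)) - (G + 1 * ((k*e - h*f)/(e+q*f)^2))/(e+q*f)) -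
      (((g + (A*0 - cu*q)*k)*(e+q*f) - (h+q*k)*(d+(A*0 - cu*q)*f))/(a*(e+q*f))
      + U0*((h+q*k)/(e+q*f)) - (G + 0 * ((k*e - h*f)/(e+q*f)^2))/(e+q*f)))
     by (field; split; assumption).
    lra. }
  unfold Rdiv in Hd. apply Rmult_integral in Hd as [Hd|Hd].
  - apply Rmult_integral in Hd as [Hd|Hd]; [lra|contradiction].
  - exfalso. revert Hd. apply Rinv_neq_0_compat. apply Rmult_integral_contrapositive. split; [auto|].
    apply pow_nonzero; auto. Qed.

Lemma f_zero (A a e f : R) : A <> 0 -> (forall q, e + q*f <> 0 -> A*(e+q*f)^2 = a) -> f = 0.
Proof. intros HA H. destruct (Req_dec f 0) as [|Hf]; [auto|exfalso].
  pose proof (H ((f - e)/f)) as h1. pose proof (H ((2*f - e)/f)) as h2.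
  replace (e + (f - e)/f * f) with f in h1 by (field; auto).
  replace (e + (2*f - e)/f * f) with (2*f) in h2 by (field; auto).
  specialize (h1 Hf). assert (2*f <> 0) by lra. specialize (h2 H0).
  assert (A * f^2 * 3 = 0) by nra.
  apply Rmult_integral in H1 as [H1|H1]; [|lra].
  apply Rmult_integral in H1 as [H1|H1]; [auto|]. apply (pow_nonzero f 2 Hf H1). Qed.

Lemma C2a t x u q : pd_x X t x u + q * pd_u X t x u <> 0 ->
  A2 t x * (pd_x X t x u + q * pd_u X t x u)^2 = pd_t T t x u.
Proof. intros Hm.
  apply (w_extract (A2 t x) (pd_t U t x u) (pd_x U t x u) (pd_u U t x u) (pd_t X t x u) (pd_x X t x u)
    (pd_u X t x u) (pd_t T t x u) q (U t x u) (C t x * u)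
    (Derive (fun y => (pd_x U t y u + q * pd_u U t y u) / (pd_x X t y u + q * pd_u X t y u)) x +
     q * Derive (fun v => (pd_x U t x v + q * pd_u U t x v) / (pd_x X t x v + q * pd_u X t x v)) u));
   [apply Tt_nz|exact Hm| |].
  { intro H. apply (HJ t x u). rewrite J_C1. replace (pd_x X t x u * pd_u U t x u - pd_u X t x u * pd_x U t x u) with 0 by lra. ring. }
  intros w.
  set (p := A2 t x * w - C t x * u * q).
  assert (HD : pDelta T X t x u p q <> 0).
  { rewrite pDelta_eq. apply Rmult_integral_contrapositive. split; [apply Tt_nz|exact Hm]. }
  assert (Heq : p + C t x * u * q = A2 t x * w) by (unfold p; ring).
  pose proof (HM t x u p q 0 0 w HD Heq) as E.
  rewrite NUT, NUX, NUXX in E. unfold Dx1 in E. rewrite Gx_eq, Gu_eq, Q_eq in E by exact Hm.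
  rewrite Rmult_0_l, Rplus_0_r in E.
  replace (A2 t x * w - C t x * u * q) with p by (unfold p; ring). exact E. Qed.

Lemma Xu0 t x u : pd_u X t x u = 0.
Proof. apply (f_zero (A2 t x) (pd_t T t x u) (pd_x X t x u)); [apply A2_nz|].
  intros q Hq. apply C2a; auto. Qed.

Lemma Xx_nz t x u : pd_x X t x u <> 0.
Proof. intro H. apply (HJ t x u). rewrite J_C1, H, Xu0. ring. Qed.

Lemma Uu_nz t x u : pd_u U t x u <> 0.
Proof. intro H. apply (HJ t x u). rewrite J_C1, H, Xu0. ring. Qed.

Lemma C2 t x u : A2 t x * (pd_x X t x u)^2 = pd_t T t x u.
Proof. pose proof (C2a t x u 0) as H. rewrite Rmult_0_l, Rplus_0_r in H. apply H. apply Xx_nz. Qed.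

Lemma ex3t F w t x u : smooth3 F -> ex_derive (fun s => ipd3 w F s x u) t.
Proof. intros H. apply (proj1 (proj1 (H w) t x u)). Qed.
Lemma ex3x F w t x u : smooth3 F -> ex_derive (fun y => ipd3 w F t y u) x.
Proof. intros H. apply (proj1 (proj2 (proj1 (H w) t x u))). Qed.
Lemma ex3u F w t x u : smooth3 F -> ex_derive (fun v => ipd3 w F t x v) u.
Proof. intros H. apply (proj2 (proj2 (proj1 (H w) t x u))). Qed.

Lemma quot_deriv (hh kk ee : R -> R) q x : ex_derive hh x -> ex_derive kk x -> ex_derive ee x -> ee x <> 0 ->
  Derive (fun y => (hh y + q * kk y) / ee y) x =
  ((Derive hh x + q * Derive kk x) * ee x - (hh x + q * kk x) * Derive ee x) / (ee x)^2.
Proof. intros H1 H2 H3 H4. apply is_derive_unique. auto_derive; [repeat split; auto|].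
  change (Derive (fun x0 => hh x0) x) with (Derive hh x).
  change (Derive (fun x0 => kk x0) x) with (Derive kk x).
  change (Derive (fun x0 => ee x0) x) with (Derive ee x). field. auto. Qed.

Lemma X_const_u t x u : X t x u = X t x 0.
Proof. apply (const_of_derive0 (fun v => X t x v)).
  - intro y. exact (ex3u X nil t x y HX).
  - intro y. apply Xu0. Qed.

Lemma Gx_formula t x u q : Derive (fun y => (pd_x U t y u + q * pd_u U t y u) / (pd_x X t y u + q * pd_u X t y u)) x =
  ((Derive (fun y => pd_x U t y u) x + q * Derive (fun y => pd_u U t y u) x) * pd_x X t x u
   - (pd_x U t x u + q * pd_u U t x u) * Derive (fun y => pd_x X t y u) x) / (pd_x X t x u)^2.
Proof. rewrite (Derive_ext _ (fun y => (pd_x U t y u + q * pd_u U t y u) / (pd_x X t y u))) by (intro; rewrite Xu0; f_equal; ring).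
  apply (quot_deriv (fun y => pd_x U t y u) (fun y => pd_u U t y u) (fun y => pd_x X t y u)).
  - exact (ex3x U (D3x :: nil) t x u HU).
  - exact (ex3x U (D3u :: nil) t x u HU).
  - exact (ex3x X (D3x :: nil) t x u HX).
  - apply Xx_nz. Qed.

Lemma Xx_const_u t x u : pd_x X t x u = pd_x X t x 0.
Proof. unfold pd_x. apply Derive_ext. intro y. apply X_const_u. Qed.

Lemma Gu_formula t x u q : Derive (fun v => (pd_x U t x v + q * pd_u U t x v) / (pd_x X t x v + q * pd_u X t x v)) u =
  (Derive (fun v => pd_x U t x v) u + q * Derive (fun v => pd_u U t x v) u) / pd_x X t x u.
Proof. rewrite (Derive_ext _ (fun v => (pd_x U t x v + q * pd_u U t x v) * / (pd_x X t x 0)))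
    by (intro; rewrite Xu0, (Xx_const_u t x t0); unfold Rdiv; f_equal; f_equal; ring).
  rewrite Derive_mult; [|apply (ex_derive_plus (fun v => pd_x U t x v) (fun v => q * pd_u U t x v));
     [exact (ex3u U (D3x :: nil) t x u HU)|apply ex_derive_scal; exact (ex3u U (D3u :: nil) t x u HU)]|apply ex_derive_const].
  rewrite Derive_const, Derive_plus; [|exact (ex3u U (D3x :: nil) t x u HU)|apply ex_derive_scal; exact (ex3u U (D3u :: nil) t x u HU)].
  rewrite Derive_scal, (Xx_const_u t x u). unfold Rdiv. rewrite Rmult_0_r, Rplus_0_r. reflexivity. Qed.

Lemma poly2 (c0 c1 c2 : R) : (forall z, c0 + c1*z + c2*z^2 = 0) -> c0 = 0 /\ c1 = 0 /\ c2 = 0.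
Proof. intros H. pose proof (H 0) as h0. pose proof (H 1) as h1. pose proof (H (-1)) as h2.
  simpl in *. lra. Qed.

Lemma q_extract (A g h k d e a cu U0 hx kx ex hu ku : R) : a <> 0 -> e <> 0 ->
 (forall q, ((g + (A*0 - cu*q)*k)*e - (h + q*k)*d)/(a*e) + U0*((h + q*k)/e) =
    (((hx + q*kx)*e - (h+q*k)*ex)/e^2 + q*((hu + q*ku)/e))/e) ->
 ku = 0 /\ (-cu*k*e - k*d)/(a*e) + U0*k/e - (kx*e - k*ex)/e^3 - hu/e^2 = 0 /\
   (g*e - h*d)/(a*e) + U0*h/e - (hx*e - h*ex)/e^3 = 0.
Proof. intros Ha He H.
  destruct (poly2 ((g*e - h*d)/(a*e) + U0*h/e - (hx*e - h*ex)/e^3)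
     ((-cu*k*e - k*d)/(a*e) + U0*k/e - (kx*e - k*ex)/e^3 - hu/e^2) (- ku / e^2)) as [r0 [r1 r2]].
  { intro z. pose proof (H z) as Hz.
    match type of Hz with ?L = ?R =>
      replace ((g*e - h*d)/(a*e) + U0*h/e - (hx*e - h*ex)/e^3 +
        ((-cu*k*e - k*d)/(a*e) + U0*k/e - (kx*e - k*ex)/e^3 - hu/e^2)*z + (- ku / e^2)*z^2) with (L - R)
      by (field; split; auto) end. rewrite Hz. ring. }
  split; [|split; auto].
  replace ku with (- (-ku/e^2) * e^2) by (field; auto). rewrite r2. ring. Qed.

Lemma Phi t x u :
  Derive (fun v => pd_u U t x v) u = 0 /\
  (- (C t x * u) * pd_u U t x u * pd_x X t x u - pd_u U t x u * pd_t X t x u)/(pd_t T t x u * pd_x X t x u)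
   + U t x u * pd_u U t x u / pd_x X t x u
   - (Derive (fun y => pd_u U t y u) x * pd_x X t x u - pd_u U t x u * Derive (fun y => pd_x X t y u) x)/(pd_x X t x u)^3
   - Derive (fun v => pd_x U t x v) u / (pd_x X t x u)^2 = 0 /\
  (pd_t U t x u * pd_x X t x u - pd_x U t x u * pd_t X t x u)/(pd_t T t x u * pd_x X t x u)
   + U t x u * pd_x U t x u / pd_x X t x u
   - (Derive (fun y => pd_x U t y u) x * pd_x X t x u - pd_x U t x u * Derive (fun y => pd_x X t y u) x)/(pd_x X t x u)^3 = 0.
Proof.
  apply (q_extract (A2 t x)); [apply Tt_nz|apply Xx_nz|].
  intro q.
  set (p := A2 t x * 0 - C t x * u * q).
  assert (HD : pDelta T X t x u p q <> 0).
  { rewrite pDelta_eq, Xu0. apply Rmult_integral_contrapositive. split; [apply Tt_nz|rewrite Rmult_0_r, Rplus_0_r; apply Xx_nz]. }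
  assert (Heq : p + C t x * u * q = A2 t x * 0) by (unfold p; ring).
  pose proof (HM t x u p q 0 0 0 HD Heq) as E.
  rewrite NUT, NUX, NUXX in E. unfold Dx1 in E. rewrite Gx_eq, Gu_eq in E.
  rewrite Gx_formula, Gu_formula in E. rewrite !Rmult_0_l, !Rplus_0_r in E. rewrite !Xu0 in E.
  rewrite !Rmult_0_r, !Rplus_0_r in E.
  exact E. Qed.

Definition V t x := pd_u U t x 0.
Definition W t x := U t x 0.

Lemma deriv_lin (f g : R -> R) x u : ex_derive f x -> ex_derive g x ->
  Derive (fun y => f y + g y * u) x = Derive f x + Derive g x * u.
Proof. intros H1 H2. apply is_derive_unique. auto_derive; [split; auto|].
  change (Derive (fun x0 => f x0) x) with (Derive f x).
  change (Derive (fun x0 => g x0) x) with (Derive g x). ring. Qed.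

Lemma Uu_const t x u : pd_u U t x u = V t x.
Proof. unfold V. apply (const_of_derive0 (fun v => pd_u U t x v)).
  - intro y. exact (ex3u U (D3u :: nil) t x y HU).
  - intro y. apply Phi. Qed.

Lemma U_lin t x u : U t x u = W t x + V t x * u.
Proof. unfold W.
  assert (H : U t x u - V t x * u = U t x 0 - V t x * 0).
  { apply (const_of_derive0 (fun v => U t x v - V t x * v)).
    - intro y. apply (ex_derive_minus (fun v => U t x v) (fun v => V t x * v)).
      + exact (ex3u U nil t x y HU).
      + apply ex_derive_scal, ex_derive_id.
    - intro y. rewrite Derive_minus; [|exact (ex3u U nil t x y HU)|apply ex_derive_scal, ex_derive_id].
      rewrite Derive_scal, Derive_id. transitivity (pd_u U t x y - V t x * 1); [reflexivity|].
      rewrite Uu_const. ring. }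
  lra. Qed.

Lemma exW_x t x : ex_derive (fun y => W t y) x.
Proof. exact (ex3x U nil t x 0 HU). Qed.
Lemma exV_x t x : ex_derive (fun y => V t y) x.
Proof. exact (ex3x U (D3u :: nil) t x 0 HU). Qed.
Lemma exW_t t x : ex_derive (fun s => W s x) t.
Proof. exact (ex3t U nil t x 0 HU). Qed.
Lemma exV_t t x : ex_derive (fun s => V s x) t.
Proof. exact (ex3t U (D3u :: nil) t x 0 HU). Qed.
Lemma exWx_x t x : ex_derive (fun y => Derive (fun y' => W t y') y) x.
Proof. exact (ex3x U (D3x :: nil) t x 0 HU). Qed.
Lemma exVx_x t x : ex_derive (fun y => Derive (fun y' => V t y') y) x.
Proof. exact (ex3x U (D3x :: D3u :: nil) t x 0 HU). Qed.

Lemma Ux_lin t x u : pd_x U t x u = Derive (fun y => W t y) x + Derive (fun y => V t y) x * u.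
Proof. unfold pd_x. rewrite (Derive_ext _ (fun y => W t y + V t y * u)) by (intro; apply U_lin).
  apply deriv_lin; [apply exW_x|apply exV_x]. Qed.

Lemma Ut_lin t x u : pd_t U t x u = Derive (fun s => W s x) t + Derive (fun s => V s x) t * u.
Proof. unfold pd_t. rewrite (Derive_ext _ (fun s => W s x + V s x * u)) by (intro; apply U_lin).
  apply deriv_lin; [apply exW_t|apply exV_t]. Qed.

Lemma hx_lin t x u : Derive (fun y => pd_x U t y u) x =
  Derive (fun y => Derive (fun y' => W t y') y) x + Derive (fun y => Derive (fun y' => V t y') y) x * u.
Proof. rewrite (Derive_ext _ (fun y => Derive (fun y' => W t y') y + Derive (fun y' => V t y') y * u))
   by (intro; apply Ux_lin).
  apply deriv_lin; [apply exWx_x|apply exVx_x]. Qed.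

Lemma kx_eq t x u : Derive (fun y => pd_u U t y u) x = Derive (fun y => V t y) x.
Proof. apply Derive_ext. intro; apply Uu_const. Qed.

Lemma hu_eq t x u : Derive (fun v => pd_x U t x v) u = Derive (fun y => V t y) x.
Proof. rewrite (Derive_ext _ (fun v => Derive (fun y => W t y) x + Derive (fun y => V t y) x * v))
   by (intro; apply Ux_lin).
  apply is_derive_unique. auto_derive; [auto|]. ring. Qed.

Lemma T_const_u t x u : T t x u = T t x 0.
Proof. apply (const_of_derive0 (fun v => T t x v)).
  - intro y. exact (ex3u T nil t x y HT).
  - intro y. apply Tu0. Qed.

Lemma Tt_const_u t x u : pd_t T t x u = pd_t T t x 0.
Proof. unfold pd_t. apply Derive_ext. intro; apply T_const_u. Qed.
Lemma Xt_const_u t x u : pd_t X t x u = pd_t X t x 0.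
Proof. unfold pd_t. apply Derive_ext. intro; apply X_const_u. Qed.
Lemma ex_const_u t x u : Derive (fun y => pd_x X t y u) x = Derive (fun y => pd_x X t y 0) x.
Proof. apply Derive_ext. intro; apply Xx_const_u. Qed.

Lemma V_nz t x : V t x <> 0.
Proof. apply Uu_nz. Qed.

Definition aa t x := pd_t T t x 0.
Definition ee t x := pd_x X t x 0.
Definition dd t x := pd_t X t x 0.
Definition exx t x := Derive (fun y => pd_x X t y 0) x.
Definition Wt t x := Derive (fun s => W s x) t.
Definition Vt t x := Derive (fun s => V s x) t.
Definition Wx t x := Derive (fun y => W t y) x.
Definition Vx t x := Derive (fun y => V t y) x.
Definition Wxx t x := Derive (fun y => Derive (fun y' => W t y') y) x.
Definition Vxx t x := Derive (fun y => Derive (fun y' => V t y') y) x.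

Lemma aa_nz t x : aa t x <> 0.
Proof. apply Tt_nz. Qed.
Lemma ee_nz t x : ee t x <> 0.
Proof. apply Xx_nz. Qed.

Lemma phi0_poly t x : forall u,
  ((Wt t x * ee t x - Wx t x * dd t x)/(aa t x * ee t x) + W t x * Wx t x / ee t x
     - (Wxx t x * ee t x - Wx t x * exx t x)/(ee t x)^3)
  + ((Vt t x * ee t x - Vx t x * dd t x)/(aa t x * ee t x) + (W t x * Vx t x + V t x * Wx t x)/ee t x
     - (Vxx t x * ee t x - Vx t x * exx t x)/(ee t x)^3) * u
  + (V t x * Vx t x / ee t x) * u^2 = 0.
Proof. intro u. destruct (Phi t x u) as [_ [_ P0]].
  rewrite (hx_lin t x u), (ex_const_u t x u), (Ut_lin t x u), (Ux_lin t x u), (U_lin t x u),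
    (Tt_const_u t x u), (Xx_const_u t x u), (Xt_const_u t x u) in P0.
  pose proof (aa_nz t x) as h1. pose proof (ee_nz t x) as h2.
  unfold aa, ee, dd, exx, Wt, Vt, Wx, Vx, Wxx, Vxx in *.
  match type of P0 with ?L = 0 => transitivity L; [|exact P0] end. field. split; auto. Qed.

Lemma Vx0 t x : Vx t x = 0.
Proof. destruct (poly2 _ _ _ (phi0_poly t x)) as [_ [_ H]].
  pose proof (ee_nz t x). pose proof (V_nz t x).
  assert (V t x * Vx t x = 0).
  { replace (V t x * Vx t x) with (V t x * Vx t x / ee t x * ee t x) by (field; auto). rewrite H. ring. }
  apply Rmult_integral in H2 as [H2|H2]; [contradiction|exact H2]. Qed.

Lemma Vxx0 t x : Vxx t x = 0.
Proof. unfold Vxx. rewrite (Derive_ext _ (fun _ => 0)) by (intro y; apply Vx0). apply Derive_const. Qed.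

Lemma V_const_x t x : V t x = V t 0.
Proof. apply (const_of_derive0 (fun y => V t y)); [intro; apply exV_x|intro; apply Vx0]. Qed.

Lemma R3 t x : Vt t x / aa t x + V t x * Wx t x / ee t x = 0.
Proof. destruct (poly2 _ _ _ (phi0_poly t x)) as [_ [H _]].
  rewrite Vx0, Vxx0 in H. pose proof (aa_nz t x). pose proof (ee_nz t x).
  rewrite <- H. field. split; auto. Qed.

Lemma phi1_poly t x : forall u,
  (- V t x * dd t x /(aa t x * ee t x) + W t x * V t x / ee t x
     - (Vx t x * ee t x - V t x * exx t x)/(ee t x)^3 - Vx t x / (ee t x)^2)
  + (- C t x * V t x / aa t x + V t x * V t x / ee t x) * u + 0 * u^2 = 0.
Proof. intro u. destruct (Phi t x u) as [_ [P1 _]].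
  rewrite (kx_eq t x u), (hu_eq t x u), (ex_const_u t x u), (Uu_const t x u), (U_lin t x u),
    (Tt_const_u t x u), (Xx_const_u t x u), (Xt_const_u t x u) in P1.
  pose proof (aa_nz t x) as h1. pose proof (ee_nz t x) as h2.
  unfold aa, ee, dd, exx, Wt, Vt, Wx, Vx, Wxx, Vxx in *.
  match type of P1 with ?L = 0 => transitivity L; [|exact P1] end. field. split; auto. Qed.

Lemma R1 t x : C t x = aa t x * V t x / ee t x.
Proof. destruct (poly2 _ _ _ (phi1_poly t x)) as [_ [H _]].
  pose proof (aa_nz t x). pose proof (ee_nz t x). pose proof (V_nz t x).
  assert (E : V t x * (aa t x * V t x - C t x * ee t x) / (aa t x * ee t x) = 0) by (rewrite <- H; field; split; auto).
  unfold Rdiv in E. apply Rmult_integral in E as [E|E].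
  - apply Rmult_integral in E as [E|E]; [contradiction|].
    assert (E' : C t x * ee t x = aa t x * V t x) by lra.
    replace (C t x) with (C t x * ee t x / ee t x) by (field; auto). rewrite E'. reflexivity.
  - exfalso. revert E. apply Rinv_neq_0_compat. apply Rmult_integral_contrapositive. split; auto. Qed.

Lemma R2 t x : dd t x = aa t x * W t x + aa t x * exx t x / (ee t x)^2.
Proof. destruct (poly2 _ _ _ (phi1_poly t x)) as [H _].
  rewrite Vx0 in H.
  pose proof (aa_nz t x). pose proof (ee_nz t x). pose proof (V_nz t x).
  assert (E : V t x * (aa t x * W t x * (ee t x)^2 + aa t x * exx t x - dd t x * (ee t x)^2) / (aa t x * (ee t x)^3) = 0)
    by (rewrite <- H; field; split; auto).
  unfold Rdiv in E. apply Rmult_integral in E as [E|E].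
  - apply Rmult_integral in E as [E|E]; [contradiction|].
    assert (E' : dd t x * (ee t x)^2 = aa t x * W t x * (ee t x)^2 + aa t x * exx t x) by lra.
    replace (dd t x) with (dd t x * (ee t x)^2 / (ee t x)^2) by (field; auto). rewrite E'. field. auto.
  - exfalso. revert E. apply Rinv_neq_0_compat. apply Rmult_integral_contrapositive. split; auto.
    apply pow_nonzero; auto. Qed.

Lemma C2' t x : A2 t x * (ee t x)^2 = aa t x.
Proof. exact (C2 t x 0). Qed.

Lemma A2_eq t x : A2 t x = aa t x / (ee t x)^2.
Proof. rewrite <- C2'. field. apply ee_nz. Qed.

Lemma aa_const t x : aa t x = aa t 0.
Proof. unfold aa, pd_t. apply Derive_ext. intro s.
  apply (const_of_derive0 (fun y => T s y 0)); [intro; exact (ex3x T nil s y 0 HT)|intro; apply Tx0]. Qed.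

Lemma goalA t x : Derive (fun y => C t y ^ 2 / A2 t y) x = 0.
Proof. rewrite (Derive_ext _ (fun _ => aa t 0 * V t 0 ^ 2)); [apply Derive_const|].
  intro y. rewrite (R1 t y), (A2_eq t y), (aa_const t y), (V_const_x t y).
  pose proof (aa_nz t 0). pose proof (ee_nz t y). field. split; auto. Qed.

Lemma cont3_2d (F : R -> R -> R -> R) t x u :
  continuous (fun p : R * R * R => F (fst (fst p)) (snd (fst p)) (snd p)) (t, x, u) ->
  continuity_2d_pt (fun a b => F a b u) t x.
Proof. intros H. apply continuity_2d_pt_filterlim.
  apply (continuous_comp_2 (fun z : R * R => z) (fun _ : R * R => u)
     (fun (a : R * R) (b : R) => F (fst a) (snd a) b) (t, x)).
  - apply continuous_id.
  - apply continuous_const.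
  - exact H. Qed.

Lemma schwarz_X t x : Derive (fun s => ee s x) t = Derive (fun y => dd t y) x.
Proof. unfold ee, dd, pd_x, pd_t.
  apply (Schwarz (fun s y => X s y 0) t x).
  - exists (mkposreal 1 Rlt_0_1). intros u v _ _. repeat split.
    + exact (ex3t X nil u v 0 HX).
    + exact (ex3x X nil u v 0 HX).
    + exact (ex3t X (D3x :: nil) u v 0 HX).
    + exact (ex3x X (D3t :: nil) u v 0 HX).
  - exact (cont3_2d (ipd3 (D3t :: D3x :: nil) X) t x 0 (proj2 (HX _) t x 0)).
  - exact (cont3_2d (ipd3 (D3x :: D3t :: nil) X) t x 0 (proj2 (HX _) t x 0)). Qed.

Lemma dq2 (ex e : R -> R) x K : ex_derive ex x -> ex_derive e x -> e x <> 0 ->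
  Derive (fun y => K * ex y / e y ^ 2) x = K * (Derive ex x * e x ^ 2 - ex x * (2 * e x * Derive e x)) / e x ^ 4.
Proof. intros H1 H2 H3. apply is_derive_unique. auto_derive; [repeat split; auto|].
  change (Derive (fun x0 => ex x0) x) with (Derive ex x).
  change (Derive (fun x0 => e x0) x) with (Derive e x). field. auto. Qed.

Lemma dinv (e : R -> R) x K : ex_derive e x -> e x <> 0 ->
  Derive (fun z => K / e z) x = - K * Derive e x / e x ^ 2.
Proof. intros H1 H2. apply is_derive_unique. auto_derive; [repeat split; auto|].
  change (Derive (fun x0 => e x0) x) with (Derive e x). field. auto. Qed.

Lemma exee_x t x : ex_derive (fun y => ee t y) x.
Proof. exact (ex3x X (D3x :: nil) t x 0 HX). Qed.
Lemma exexx_x t x : ex_derive (fun y => exx t y) x.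
Proof. exact (ex3x X (D3x :: D3x :: nil) t x 0 HX). Qed.

Lemma goalB t x : Derive (fun s => C s x / A2 s x) t = - Derive (fun y => Derive (fun z => C t z) y) x.
Proof.
  rewrite (Derive_ext _ (fun s => V s x * ee s x)).
  2:{ intro s. rewrite (R1 s x), (A2_eq s x). pose proof (aa_nz s x). pose proof (ee_nz s x). field. split; auto. }
  rewrite Derive_mult; [|apply exV_t|exact (ex3t X (D3x :: nil) t x 0 HX)].
  rewrite schwarz_X.
  rewrite (Derive_ext (fun y => dd t y) (fun y => aa t 0 * W t y + aa t 0 * exx t y / ee t y ^ 2))
    by (intro y; rewrite R2, (aa_const t y); reflexivity).
  rewrite Derive_plus; [|apply ex_derive_scal, exW_x|].
  2:{ apply (ex_derive_mult (fun y => aa t 0 * exx t y) (fun y => / ee t y ^ 2)).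
      - apply ex_derive_scal, exexx_x.
      - apply (ex_derive_inv (fun y => ee t y ^ 2)); [|apply pow_nonzero, ee_nz].
        apply ex_derive_pow, exee_x. }
  rewrite Derive_scal, (dq2 (fun y => exx t y) (fun y => ee t y)); [|apply exexx_x|apply exee_x|apply ee_nz].
  rewrite (Derive_ext (fun y => Derive (fun z => C t z) y) (fun y => - (aa t 0 * V t 0) * exx t y / ee t y ^ 2)).
  2:{ intro y. rewrite (Derive_ext (fun z => C t z) (fun z => aa t 0 * V t 0 / ee t z)).
      2:{ intro z. rewrite R1, (aa_const t z), (V_const_x t z). reflexivity. }
      rewrite dinv; [reflexivity|apply exee_x|apply ee_nz]. }
  rewrite (dq2 (fun y => exx t y) (fun y => ee t y)); [|apply exexx_x|apply exee_x|apply ee_nz].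
  change (Derive (fun y => ee t y) x) with (exx t x).
  pose proof (R3 t x) as H3. rewrite (aa_const t x) in H3. rewrite (V_const_x t x) in *.
  change (Derive (fun y => W t y) x) with (Wx t x).
  change (Derive (fun s => V s x) t) with (Vt t x).
  pose proof (aa_nz t 0). pose proof (ee_nz t x).
  assert (H4 : Vt t x * ee t x = - aa t 0 * V t 0 * Wx t x).
  { replace (Vt t x * ee t x) with ((Vt t x / aa t 0 + V t 0 * Wx t x / ee t x) * aa t 0 * ee t x - aa t 0 * V t 0 * Wx t x)
      by (field; split; auto). rewrite H3. ring. }
  rewrite H4. change (Derive (W t) x) with (Wx t x). field. auto. Qed.
End Forward.

Lemma FTC0 (f : R -> R) (Hc : forall z, continuous f z) t :
  is_derive (fun b => RInt f 0 b) t (f t).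
Proof. apply (is_derive_RInt f (fun b => RInt f 0 b) 0 t).
  - apply filter_forall. intro b. apply (@RInt_correct R_CompleteNormedModule). apply (@ex_RInt_continuous R_CompleteNormedModule). intros; apply Hc.
  - apply Hc. Qed.

Lemma exd_cont (f : R -> R) x : ex_derive f x -> continuous f x.
Proof. intro H. exact (@ex_derive_continuous R_AbsRing R_NormedModule f x H). Qed.

Section Backward.
Variables (A2 C : R -> R -> R).
Hypothesis HA2 : smooth2 A2.
Hypothesis HC : smooth2 C.
Hypothesis HAC : forall t x, A2 t x * C t x <> 0.
Hypothesis H1 : forall t x, Derive (fun y => C t y ^ 2 / A2 t y) x = 0.
Hypothesis H2 : forall t x, Derive (fun s => C s x / A2 s x) t
                 = - Derive (fun y => Derive (fun z => C t z) y) x.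

Lemma bA2_nz t x : A2 t x <> 0.
Proof. intro H. apply (HAC t x). rewrite H. ring. Qed.
Lemma bC_nz t x : C t x <> 0.
Proof. intro H. apply (HAC t x). rewrite H. ring. Qed.

Definition KK t x := C t x ^ 2 / A2 t x.
Definition gg t x := C t x / A2 t x.
Definition Cx t x := Derive (fun z => C t z) x.

Lemma KK_smooth : smooth2 KK.
Proof. apply (smooth2_ext (fun t x => (C t x * C t x) * / A2 t x)).
  - intros; unfold KK; unfold Rdiv; ring.
  - apply smooth2_mult; [apply smooth2_mult; auto|apply smooth2_inv; auto]. intros; apply bA2_nz. Qed.

Lemma gg_smooth : smooth2 gg.
Proof. apply (smooth2_ext (fun t x => C t x * / A2 t x)).
  - intros; unfold gg; unfold Rdiv; ring.
  - apply smooth2_mult; [auto|apply smooth2_inv; auto]. intros; apply bA2_nz. Qed.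

Lemma Cx_smooth : smooth2 Cx.
Proof. exact (smooth2_dx C HC). Qed.

Lemma KK_const t x : KK t x = KK t 0.
Proof. apply (const_of_derive0 (fun y => KK t y)).
  - intro y. apply (proj1 (smooth2_P2 _ KK_smooth) t y).
  - intro y. apply H1. Qed.

Lemma KK_nz t x : KK t x <> 0.
Proof. unfold KK. pose proof (bA2_nz t x). pose proof (bC_nz t x).
  unfold Rdiv. apply Rmult_integral_contrapositive. split; [apply pow_nonzero; auto|apply Rinv_neq_0_compat; auto]. Qed.
Lemma gg_nz t x : gg t x <> 0.
Proof. unfold gg. pose proof (bA2_nz t x). pose proof (bC_nz t x).
  unfold Rdiv. apply Rmult_integral_contrapositive. split; [auto|apply Rinv_neq_0_compat; auto]. Qed.

Lemma cont_t (F : R -> R -> R) : smooth2 F -> forall t x, continuous (fun s => F s x) t.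
Proof. intros H t x. apply exd_cont. apply (proj1 (smooth2_P2 _ H) t x). Qed.
Lemma cont_x (F : R -> R -> R) : smooth2 F -> forall t x, continuous (fun y => F t y) x.
Proof. intros H t x. apply exd_cont. apply (proj1 (smooth2_P2 _ H) t x). Qed.

Definition TT t := RInt (fun s => KK s 0) 0 t.
Definition XX t x := RInt (fun y => gg t y) 0 x - RInt (fun s => Cx s 0) 0 t.

Lemma TT_deriv t : is_derive TT t (KK t 0).
Proof. apply (FTC0 (fun s => KK s 0)). intro; apply (cont_t KK KK_smooth). Qed.

Lemma XX_dx t x : is_derive (fun y => XX t y) x (gg t x).
Proof. unfold XX. apply (is_derive_ext (fun y => RInt (fun y0 => gg t y0) 0 y + (- RInt (fun s => Cx s 0) 0 t))).
  { intro; reflexivity. }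
  replace (gg t x) with (gg t x + 0) by ring.
  apply (is_derive_plus (fun y => RInt (fun y0 => gg t y0) 0 y) (fun _ => - RInt (fun s => Cx s 0) 0 t)).
  - apply (FTC0 (fun y => gg t y)). intro; apply (cont_x gg gg_smooth).
  - exact (@is_derive_const R_AbsRing R_NormedModule _ x). Qed.

Lemma XX_dt t x : is_derive (fun s => XX s x) t (- Cx t x).
Proof. unfold XX.
  assert (HA : is_derive (fun s => RInt (fun y => gg s y) 0 x) t (RInt (fun y => Derive (fun u => gg u y) t) 0 x)).
  { apply (is_derive_RInt_param (fun u y => gg u y) 0 x t).
    - apply filter_forall. intros s y _. apply (proj1 (smooth2_P2 _ gg_smooth) s y).
    - intros y _. apply cont2_to. apply (proj2 (smooth2_P2 _ (smooth2_dt gg gg_smooth))).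
    - apply filter_forall. intro s. apply (@ex_RInt_continuous R_CompleteNormedModule). intros; apply (cont_x gg gg_smooth). }
  assert (HB : RInt (fun y => Derive (fun u => gg u y) t) 0 x = - (Cx t x - Cx t 0)).
  { rewrite (RInt_ext _ (fun y => - Derive (fun y0 => Cx t y0) y)).
    2:{ intros y _. exact (H2 t y). }
    transitivity (opp (RInt (fun y => Derive (fun y0 => Cx t y0) y) 0 x)).
    { apply (@RInt_opp R_CompleteNormedModule (fun y => Derive (fun y0 => Cx t y0) y) 0 x).
      apply (@ex_RInt_continuous R_CompleteNormedModule). intros z _. apply exd_cont.
      apply (proj1 (smooth2_P2 _ (smooth2_dx _ Cx_smooth)) t z). }
    replace (RInt (fun y => Derive (fun y0 => Cx t y0) y) 0 x) with (Cx t x - Cx t 0); [reflexivity|].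
    symmetry. apply (RInt_Derive (fun y0 => Cx t y0)).
    - intros z _. apply (proj1 (smooth2_P2 _ Cx_smooth) t z).
    - intros z _. apply exd_cont. apply (proj1 (smooth2_P2 _ (smooth2_dx _ Cx_smooth)) t z). }
  rewrite HB in HA.
  pose proof (FTC0 (fun s => Cx s 0) ltac:(intro; apply (cont_t Cx Cx_smooth)) t) as HC0.
  pose proof (is_derive_minus _ _ _ _ _ HA HC0) as HM. simpl in HM.
  eapply is_derive_ext; [|replace (- Cx t x) with (- (Cx t x - Cx t 0) - Cx t 0) by ring; exact HM].
  intro; reflexivity. Qed.

Lemma XX_smooth : smooth2 XX.
Proof. apply smooth2_intro.
  - split.
    + intros t x. split; [exists (- Cx t x); apply XX_dt|exists (gg t x); apply XX_dx].
    + intros t x. apply cont2_of. apply (joint_cont XX gg).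
      * intros; apply XX_dx.
      * intros t0 x0. apply cont2_to. apply (proj2 (smooth2_P2 _ gg_smooth)).
      * intros t0 x0. apply exd_cont. exists (- Cx t0 x0). apply XX_dt.
  - apply (smooth2_ext (fun t x => -1 * Cx t x)).
    + intros t x. unfold dt2. erewrite is_derive_unique; [|apply XX_dt]. ring.
    + apply smooth2_mult; [apply smooth2_const|apply Cx_smooth].
  - apply (smooth2_ext gg).
    + intros t x. unfold dx2. erewrite is_derive_unique; [|apply XX_dx]. reflexivity.
    + apply gg_smooth. Qed.

Lemma TT2_smooth : smooth2 (fun t x => TT t).
Proof. apply smooth2_intro.
  - split.
    + intros t x. split; [exists (KK t 0); apply TT_deriv|apply ex_derive_const].
    + intros t x. apply (continuous_comp (fun p : R * R => fst p) TT).
      * apply continuous_fst.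
      * apply exd_cont. exists (KK t 0). apply TT_deriv.
  - apply (smooth2_ext KK).
    + intros t x. unfold dt2. erewrite is_derive_unique; [|apply TT_deriv]. apply KK_const.
    + apply KK_smooth.
  - apply (smooth2_ext (fun _ _ => 0)).
    + intros t x. unfold dx2. rewrite Derive_const. reflexivity.
    + apply smooth2_const. Qed.

Lemma smooth3_lift0 (G : R -> R -> R) : smooth2 G -> smooth3 (fun t x u => G t x).
Proof. intros HG. replace (fun t x u => G t x) with (fun t x (u : R) => G t x + 0 * u).
  - apply smooth3_lift. exact HG.
  - apply functional_extensionality; intro t; apply functional_extensionality; intro x;
    apply functional_extensionality; intro u. ring. Qed.

Lemma smooth3_U : smooth3 (fun t x u => 1 * u + 0).
Proof. replace (fun t x u => 1 * u + 0) with (fun (t x : R) u => (fun _ _ => 0) t x + 1 * u).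
  - apply smooth3_lift. apply smooth2_const.
  - apply functional_extensionality; intro t; apply functional_extensionality; intro x;
    apply functional_extensionality; intro u. ring. Qed.

Lemma pdT_t t x u : pd_t (fun t x u => TT t) t x u = KK t 0.
Proof. unfold pd_t. apply is_derive_unique. apply TT_deriv. Qed.
Lemma pdT_x t x u : pd_x (fun t x u => TT t) t x u = 0.
Proof. unfold pd_x. apply Derive_const. Qed.
Lemma pdT_u t x u : pd_u (fun t x u => TT t) t x u = 0.
Proof. unfold pd_u. apply Derive_const. Qed.
Lemma pdX_t t x u : pd_t (fun t x u => XX t x) t x u = - Cx t x.
Proof. unfold pd_t. apply is_derive_unique. apply XX_dt. Qed.
Lemma pdX_x t x u : pd_x (fun t x u => XX t x) t x u = gg t x.
Proof. unfold pd_x. apply is_derive_unique. apply XX_dx. Qed.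
Lemma pdX_u t x u : pd_u (fun t x u => XX t x) t x u = 0.
Proof. unfold pd_u. apply Derive_const. Qed.
Lemma pdU_t t x u : pd_t (fun t x u => 1 * u + 0) t x u = 0.
Proof. unfold pd_t. apply Derive_const. Qed.
Lemma pdU_x t x u : pd_x (fun t x u => 1 * u + 0) t x u = 0.
Proof. unfold pd_x. apply Derive_const. Qed.
Lemma pdU_u t x u : pd_u (fun t x u => 1 * u + 0) t x u = 1.
Proof. unfold pd_u. apply is_derive_unique. auto_derive; auto. ring. Qed.

Lemma jac_back t x u : jacobian3 (fun t x u => TT t) (fun t x u => XX t x) (fun t x u => 1 * u + 0) t x u <> 0.
Proof. unfold jacobian3. rewrite ?pdT_t, ?pdT_x, ?pdT_u, ?pdX_t, ?pdX_x, ?pdX_u, ?pdU_t, ?pdU_x, ?pdU_u.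
  replace (KK t 0 * (gg t x * 1 - 0 * 0) - 0 * (- Cx t x * 1 - 0 * 0) + 0 * (- Cx t x * 0 - gg t x * 0))
    with (KK t 0 * gg t x) by ring.
  apply Rmult_integral_contrapositive. split; [apply KK_nz|apply gg_nz]. Qed.

Lemma NUXb t x u p q : new_ux (fun t x u => TT t) (fun t x u => XX t x) (fun t x u => 1 * u + 0) t x u p q
  = q / gg t x.
Proof. unfold new_ux, pDelta, Dx0, Dt0.
  rewrite ?pdT_t, ?pdT_x, ?pdT_u, ?pdX_t, ?pdX_x, ?pdX_u, ?pdU_t, ?pdU_x, ?pdU_u.
  transitivity ((KK t 0 * q) / (KK t 0 * gg t x)).
  - unfold Rdiv. f_equal; [ring|f_equal; ring].
  - apply cancel_a, KK_nz. Qed.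

Lemma gg_eq t y : gg t y = KK t 0 / C t y.
Proof. rewrite <- (KK_const t y). unfold KK, gg. pose proof (bA2_nz t y). pose proof (bC_nz t y). field. split; auto. Qed.

Lemma A2_eqb t x : A2 t x = C t x ^ 2 / KK t 0.
Proof. rewrite <- (KK_const t x). unfold KK. pose proof (bA2_nz t x). pose proof (bC_nz t x). field. split; auto. Qed.

Lemma maps_back : maps_to_Burgers A2 C (fun t x u => TT t) (fun t x u => XX t x) (fun t x u => 1 * u + 0).
Proof. intros t x u p q r s w HD Heq.
  unfold new_uxx, Dx1, Dt1.
  rewrite (Derive_ext (fun a => new_ux _ _ _ t a u p q) (fun a => q / gg t a)) by (intro; apply NUXb).
  rewrite (Derive_ext (fun a => new_ux _ _ _ t x a p q) (fun _ => q / gg t x)) by (intro; apply NUXb).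
  rewrite (Derive_ext (fun a => new_ux _ _ _ t x u a q) (fun _ => q / gg t x)) by (intro; apply NUXb).
  rewrite (Derive_ext (fun a => new_ux _ _ _ t x u p a) (fun a => a / gg t x)) by (intro; apply NUXb).
  rewrite (Derive_ext (fun a => q / gg t a) (fun a => (q / KK t 0) * C t a)).
  2:{ intro. rewrite gg_eq. field. split; [apply KK_nz|apply bC_nz]. }
  rewrite Derive_scal.
  rewrite !Derive_const.
  replace (Derive (fun a => a / gg t x) q) with (/ gg t x).
  2:{ symmetry. apply is_derive_unique. auto_derive; [tauto|]. field. apply gg_nz. }
  rewrite NUXb. unfold new_ut, pDelta, Dx0, Dt0.
  rewrite ?pdT_t, ?pdT_x, ?pdT_u, ?pdX_t, ?pdX_x, ?pdX_u, ?pdU_t, ?pdU_x, ?pdU_u.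
  assert (Hp : p = A2 t x * w - C t x * u * q) by lra. subst p.
  rewrite (A2_eqb t x), (gg_eq t x).
  change (Derive (C t) x) with (Cx t x).
  pose proof (KK_nz t 0). pose proof (bC_nz t x).
  field. split; auto. Qed.
End Backward.

Theorem corollary4 (A2 C : R -> R -> R) :
  class_L A2 C ->
  ((exists T X U : R -> R -> R -> R,
       point_transformation T X U /\ maps_to_Burgers A2 C T X U)
   <->
   ((forall t x, Derive (fun y => C t y ^ 2 / A2 t y) x = 0) /\
    (forall t x, Derive (fun s => C s x / A2 s x) t
                 = - Derive (fun y => Derive (fun z => C t z) y) x)))
  /\
  (((forall t x, Derive (fun y => C t y ^ 2 / A2 t y) x = 0) /\
    (forall t x, Derive (fun s => C s x / A2 s x) t
                 = - Derive (fun y => Derive (fun z => C t z) y) x)) ->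
   exists (T : R -> R) (X : R -> R -> R),
     point_transformation (fun t x u => T t) (fun t x u => X t x)
                          (fun t x u => 1 * u + 0) /\
     maps_to_Burgers A2 C (fun t x u => T t) (fun t x u => X t x)
                          (fun t x u => 1 * u + 0) /\
     (forall t x, Derive T t = C t x ^ 2 / A2 t x) /\
     (forall t x, Derive (fun y => X t y) x = C t x / A2 t x)).
Proof.
  intros [HA2 [HC HAC]].
  assert (back : ((forall t x, Derive (fun y => C t y ^ 2 / A2 t y) x = 0) /\
    (forall t x, Derive (fun s => C s x / A2 s x) t
                 = - Derive (fun y => Derive (fun z => C t z) y) x)) ->
   exists (T : R -> R) (X : R -> R -> R),
     point_transformation (fun t x u => T t) (fun t x u => X t x)
                          (fun t x u => 1 * u + 0) /\
     maps_to_Burgers A2 C (fun t x u => T t) (fun t x u => X t x)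
                          (fun t x u => 1 * u + 0) /\
     (forall t x, Derive T t = C t x ^ 2 / A2 t x) /\
     (forall t x, Derive (fun y => X t y) x = C t x / A2 t x)).
  { intros [H1 H2]. exists (TT A2 C), (XX A2 C). split; [|split; [|split]].
    - split; [|split; [|split]].
      + apply (smooth3_lift0 (fun t x => TT A2 C t)). apply TT2_smooth; auto.
      + apply (smooth3_lift0 (fun t x => XX A2 C t x)). apply XX_smooth; auto.
      + apply smooth3_U.
      + intros t x u. apply jac_back; auto.
    - apply maps_back; auto.
    - intros t x. rewrite (is_derive_unique _ _ _ (TT_deriv A2 C HA2 HC HAC t)).
      rewrite <- (KK_const A2 C HA2 HC HAC H1 t x). reflexivity.
    - intros t x. apply is_derive_unique. eapply XX_dx; eauto. }
  split; [split|exact back].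
  - intros [T [X [U [[HT [HX [HU HJ]]] HM]]]]. split; intros t x.
    + exact (goalA A2 C T X U HAC HT HX HU HJ HM t x).
    + exact (goalB A2 C T X U HAC HT HX HU HJ HM t x).
  - intro Hc. destruct (back Hc) as [T [X [HPT [HM _]]]].
    exists (fun t x u => T t), (fun t x u => X t x), (fun t x u => 1 * u + 0). auto.
Qed.
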